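(* For every finite set $S\subset\mathbb{R}^2$ in general position, the exit graph of $S$ is supporting for $S$.
   Context: General position: no three points collinear. Two labeled point sets in general position have the same order type under a bijection $\varphi$ if every triple $(p,q,r)$ of distinct points has the same orientation (clockwise or counterclockwise) as $(\varphi(p),\varphi(q),\varphi(r))$. A geometric graph on $S$ is a graph with vertex set $S$ whose edges are drawn as straight segments between their endpoints. An ambient isotopy of $\mathbb{R}^2$ is a continuous map $f:\mathbb{R}^2\times[0,1]\to\mathbb{R}^2$ with $f(\cdot,t)$ a homeomorphism for every $t$ and $f(\cdot,0)$ the identity. A geometric graph $G$ on $S$ is supporting for $S$ if every ambient isotopy $f$ such that for every $t\in[0,1]$ the image under $f(\cdot,t)$ of each edge of $G$ is a straight segment and no four points of $f(S,t)$ are collinear, preserves the order type, i.e. for each $t$ with $f(S,t)$ in general position, $f(S,t)$ has the same order type as $S$ under $s\mapsto f(s,t)$. For distinct $a,b,c\in S$, $ab$ is an exit edge with witness $c$ if there is no $p\in S$ such that the line through $a$ and $p$ strictly separates $b$ from $c$, and no $p\in S$ such that the line through $b$ and $p$ strictly separates $a$ from $c$; $ab$ is an exit edge if it has some witness. The exit graph of $S$ is the geometric graph on $S$ whose edges are the exit edges. *)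

(* Defs.v *)
From Stdlib Require Import Reals List.
Open Scope R_scope.

Definition pt := (R * R)%type.

(* Orientation determinant: > 0 counterclockwise, < 0 clockwise, = 0 collinear. *)
Definition orient (p q r : pt) : R :=
  (fst q - fst p) * (snd r - snd p) - (snd q - snd p) * (fst r - fst p).

Definition general_position (S : list pt) : Prop :=
  forall p q r, In p S -> In q S -> In r S ->
    p <> q -> q <> r -> p <> r -> orient p q r <> 0.

Definition collinear4 (p1 p2 p3 p4 : pt) : Prop :=
  orient p1 p2 p3 = 0 /\ orient p1 p2 p4 = 0 /\
  orient p1 p3 p4 = 0 /\ orient p2 p3 p4 = 0.

Definition no_four_collinear (S : list pt) : Prop :=
  forall p1 p2 p3 p4, In p1 S -> In p2 S -> In p3 S -> In p4 S ->
    p1 <> p2 -> p1 <> p3 -> p1 <> p4 -> p2 <> p3 -> p2 <> p4 -> p3 <> p4 ->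
    ~ collinear4 p1 p2 p3 p4.

Definition strictly_separates (a p b c : pt) : Prop :=
  a <> p /\ orient a p b * orient a p c < 0.

Definition exit_edge_with (S : list pt) (a b c : pt) : Prop :=
  In a S /\ In b S /\ In c S /\ a <> b /\ b <> c /\ a <> c /\
  (~ exists p, In p S /\ strictly_separates a p b c) /\
  (~ exists p, In p S /\ strictly_separates b p a c).

Definition exit_edge (S : list pt) (a b : pt) : Prop :=
  exists c, exit_edge_with S a b c.

Definition dist2 (x y : pt) : R :=
  sqrt ((fst x - fst y) ^ 2 + (snd x - snd y) ^ 2).

Definition continuous2 (g : pt -> pt) : Prop :=
  forall x eps, 0 < eps -> exists delta, 0 < delta /\
    forall y, dist2 x y < delta -> dist2 (g x) (g y) < eps.

Definition homeomorphism2 (g : pt -> pt) : Prop :=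
  exists h : pt -> pt,
    (forall x, h (g x) = x) /\ (forall y, g (h y) = y) /\
    continuous2 g /\ continuous2 h.

(* Ambient isotopy f : R^2 x [0,1] -> R^2 (values for t outside [0,1] irrelevant). *)
Definition ambient_isotopy (f : pt -> R -> pt) : Prop :=
  (forall x t, 0 <= t <= 1 -> forall eps, 0 < eps -> exists delta, 0 < delta /\
     forall y s, 0 <= s <= 1 -> dist2 x y < delta -> Rabs (t - s) < delta ->
       dist2 (f x t) (f y s) < eps) /\
  (forall t, 0 <= t <= 1 -> homeomorphism2 (fun x => f x t)) /\
  (forall x, f x 0 = x).

Definition segment (u v : pt) (z : pt) : Prop :=
  exists l, 0 <= l <= 1 /\
    z = ((1 - l) * fst u + l * fst v, (1 - l) * snd u + l * snd v).

Definition maps_segment_to_segment (g : pt -> pt) (a b : pt) : Prop :=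
  exists u v, forall z, (exists y, segment a b y /\ z = g y) <-> segment u v z.

Definition same_order_type (S : list pt) (g : pt -> pt) : Prop :=
  forall p q r, In p S -> In q S -> In r S ->
    p <> q -> q <> r -> p <> r -> orient p q r * orient (g p) (g q) (g r) > 0.

Definition supporting (S : list pt) (E : pt -> pt -> Prop) : Prop :=
  forall f : pt -> R -> pt,
    ambient_isotopy f ->
    (forall t, 0 <= t <= 1 -> forall a b, In a S -> In b S -> E a b ->
       maps_segment_to_segment (fun x => f x t) a b) ->
    (forall t, 0 <= t <= 1 -> no_four_collinear (map (fun s => f s t) S)) ->
    forall t, 0 <= t <= 1 ->
      general_position (map (fun s => f s t) S) ->
      same_order_type S (fun s => f s t).

(* Main.v *)
Require Import Defs.
From Stdlib Require Import Reals List Lra Lia Psatz Classical FunctionalExtensionality.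
Open Scope R_scope.

Lemma cp_mult f1 f2 x : continuity_pt f1 x -> continuity_pt f2 x ->
  continuity_pt (fun t => f1 t * f2 t) x.
Proof. intros; exact (continuity_pt_mult _ _ _ H H0). Qed.
Lemma cp_minus f1 f2 x : continuity_pt f1 x -> continuity_pt f2 x ->
  continuity_pt (fun t => f1 t - f2 t) x.
Proof. intros; exact (continuity_pt_minus _ _ _ H H0). Qed.
Lemma cp_const c x : continuity_pt (fun _ => c) x.
Proof. apply continuity_pt_const; intros a b; reflexivity. Qed.
Lemma cp_abs f x : continuity_pt f x -> continuity_pt (fun t => Rabs (f t)) x.
Proof. intros H. exact (continuity_pt_comp f Rabs x H (Rcontinuity_abs _)). Qed.
Lemma cp_plus f1 f2 x : continuity_pt f1 x -> continuity_pt f2 x ->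
  continuity_pt (fun t => f1 t + f2 t) x.
Proof. intros; exact (continuity_pt_plus _ _ _ H H0). Qed.

Lemma Rmin_alt a b : Rmin a b = (a + b - Rabs (a - b)) * / 2.
Proof. unfold Rmin; destruct Rle_dec; unfold Rabs; destruct Rcase_abs; lra. Qed.

Lemma cp_min f1 f2 x : continuity_pt f1 x -> continuity_pt f2 x ->
  continuity_pt (fun t => Rmin (f1 t) (f2 t)) x.
Proof.
  intros H1 H2.
  assert (E : (fun t => Rmin (f1 t) (f2 t)) = (fun t => (f1 t + f2 t - Rabs (f1 t - f2 t)) * / 2)).
  { extensionality t. apply Rmin_alt. }
  rewrite E. apply cp_mult; [|apply cp_const].
  apply cp_minus. apply cp_plus; auto. apply cp_abs, cp_minus; auto.
Qed.

Definition clamp (t : R) : R := Rmax 0 (Rmin 1 t).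
Lemma clamp_in t : 0 <= clamp t <= 1.
Proof. unfold clamp, Rmax, Rmin; repeat destruct Rle_dec; lra. Qed.
Lemma clamp_id t : 0 <= t <= 1 -> clamp t = t.
Proof. intros; unfold clamp, Rmax, Rmin; repeat destruct Rle_dec; lra. Qed.
Lemma clamp_lip s t : Rabs (clamp s - clamp t) <= Rabs (s - t).
Proof. unfold clamp, Rmax, Rmin; repeat destruct Rle_dec; unfold Rabs;
  repeat destruct Rcase_abs; lra. Qed.

Lemma abs_fst_le a b : Rabs (fst a - fst b) <= dist2 a b.
Proof. unfold dist2. rewrite <- sqrt_Rsqr_abs. apply sqrt_le_1_alt. unfold Rsqr.
  pose proof (pow2_ge_0 (snd a - snd b)).
  replace ((fst a - fst b)^2) with ((fst a - fst b)*(fst a - fst b)) by ring; lra. Qed.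
Lemma abs_snd_le a b : Rabs (snd a - snd b) <= dist2 a b.
Proof. unfold dist2. rewrite <- sqrt_Rsqr_abs. apply sqrt_le_1_alt. unfold Rsqr.
  pose proof (pow2_ge_0 (fst a - fst b)).
  replace ((snd a - snd b)^2) with ((snd a - snd b)*(snd a - snd b)) by ring; lra. Qed.
Lemma dist2_refl a : dist2 a a = 0.
Proof. unfold dist2. rewrite !Rminus_diag. replace (0 ^ 2 + 0 ^ 2) with 0 by (simpl; ring). apply sqrt_0. Qed.

Lemma coord_cont f (HI : ambient_isotopy f) x (pr : pt -> R)
  (Hpr : forall a b, Rabs (pr a - pr b) <= dist2 a b) t0 :
  continuity_pt (fun t => pr (f x (clamp t))) t0.
Proof.
  unfold continuity_pt, continue_in, limit1_in, limit_in. intros eps Heps.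
  destruct HI as [Hc _].
  destruct (Hc x (clamp t0) (clamp_in t0) eps Heps) as [d [Hd H]].
  exists d. split; [lra|]. intros t [_ Ht]. simpl in *. unfold R_dist in *.
  rewrite Rabs_minus_sym.
  eapply Rle_lt_trans; [apply Hpr|]. apply H. apply clamp_in.
  rewrite dist2_refl; lra.
  eapply Rle_lt_trans; [apply clamp_lip|]. rewrite Rabs_minus_sym. exact Ht.
Qed.

Lemma orient_cont f (HI : ambient_isotopy f) p q r t0 :
  continuity_pt (fun t => orient (f p (clamp t)) (f q (clamp t)) (f r (clamp t))) t0.
Proof.
  unfold orient.
  assert (F := coord_cont f HI); assert (A1 := abs_fst_le); assert (A2 := abs_snd_le).
  repeat (apply cp_minus || apply cp_mult); apply F; auto.
Qed.

Definition pt_eq_dec (a b : pt) : {a = b} + {a <> b}.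
Proof. destruct a as [a1 a2], b as [b1 b2].
  destruct (Req_dec_T a1 b1) as [e1|n1]; [destruct (Req_dec_T a2 b2) as [e2|n2]|].
  - left; subst; reflexivity.
  - right; intro H; inversion H; auto.
  - right; intro H; inversion H; auto. Defined.

Definition term (g0 : pt -> pt) (tr : pt * (pt * pt)) : R :=
  let '(p, (q, r)) := tr in
  if pt_eq_dec p q then 1 else if pt_eq_dec q r then 1 else if pt_eq_dec p r then 1
  else orient (g0 p) (g0 q) (g0 r) * orient p q r.

Definition minl (l : list R) : R := fold_right Rmin 1 l.

Lemma minl_le l x : In x l -> minl l <= x.
Proof. induction l; simpl; intros H; [contradiction|].
  destruct H as [->|H]; [apply Rmin_l|]. eapply Rle_trans; [apply Rmin_r|auto]. Qed.

Lemma minl_cases l : minl l = 1 \/ exists x, In x l /\ minl l = x.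
Proof. unfold minl. induction l; simpl; [left; reflexivity|].
  destruct (Rle_lt_dec a (fold_right Rmin 1 l)).
  - rewrite Rmin_left by exact r. right; exists a; split; [left; reflexivity|reflexivity].
  - rewrite Rmin_right by lra. destruct IHl as [H|[x [Hx H]]]; [left; exact H| right; exists x; split; [right; exact Hx|exact H]]. Qed.

Lemma minl_cont (L : list (pt * (pt * pt))) (F : pt * (pt * pt) -> R -> R) t0 :
  (forall tr, continuity_pt (F tr) t0) ->
  continuity_pt (fun t => minl (map (fun tr => F tr t) L)) t0.
Proof. intros H. induction L; simpl.
  - apply cp_const.
  - apply cp_min; auto. Qed.

Lemma term_cont f (HI : ambient_isotopy f) tr t0 :
  continuity_pt (fun t => term (fun x => f x (clamp t)) tr) t0.
Proof. destruct tr as [p [q r]]. unfold term.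
  destruct (pt_eq_dec p q); [apply cp_const|].
  destruct (pt_eq_dec q r); [apply cp_const|].
  destruct (pt_eq_dec p r); [apply cp_const|].
  apply cp_mult; [apply orient_cont; auto| apply cp_const]. Qed.

Definition comb (x z : pt) (l : R) : pt :=
  ((1 - l) * fst x + l * fst z, (1 - l) * snd x + l * snd z).

Lemma collinear_middle (x y z : pt) : x <> y -> y <> z -> x <> z -> orient x y z = 0 ->
  (exists l, 0 < l < 1 /\ y = comb x z l) \/
  (exists l, 0 < l < 1 /\ x = comb y z l) \/
  (exists l, 0 < l < 1 /\ z = comb x y l).
Proof.
  destruct x as [x1 x2], y as [y1 y2], z as [z1 z2]; unfold orient, comb; simpl.
  intros Hxy Hyz Hxz Ho.
  assert (Hmu : exists mu, y1 = x1 + mu * (z1 - x1) /\ y2 = x2 + mu * (z2 - x2)).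
  { destruct (Req_dec_T z1 x1) as [e|n].
    - assert (z2 <> x2) by (intro; apply Hxz; subst; reflexivity).
      exists ((y2 - x2) / (z2 - x2)). split.
      + subst z1. assert ((y1 - x1) * (z2 - x2) = 0) by lra.
        apply Rmult_integral in H0. destruct H0; [lra|]. exfalso; lra.
      + field. lra.
    - exists ((y1 - x1) / (z1 - x1)). split.
      + field. lra.
      + apply Rmult_eq_reg_l with (z1 - x1); [|lra].
        replace ((z1 - x1) * (x2 + (y1 - x1) / (z1 - x1) * (z2 - x2)))
          with ((z1 - x1) * x2 + (y1 - x1) * (z2 - x2)) by (field; lra).
        lra. }
  destruct Hmu as [mu [E1 E2]].
  assert (mu <> 0). { intro; subst mu; apply Hxy. f_equal; lra. }
  assert (mu <> 1). { intro; subst mu; apply Hyz. f_equal; lra. }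
  destruct (Rlt_le_dec mu 0) as [Hn|Hn].
  - right; left. exists (mu / (mu - 1)). split.
    + replace (mu / (mu - 1)) with ((- mu) / (1 - mu)) by (field; lra).
      split.
      * apply Rdiv_lt_0_compat; lra.
      * apply Rmult_lt_reg_r with (1 - mu); [lra|]. unfold Rdiv.
        rewrite Rmult_assoc, Rinv_l by lra. lra.
    + f_equal; [rewrite E1 | rewrite E2]; field; lra.
  - destruct (Rlt_le_dec mu 1) as [Hm|Hm].
    + left. exists mu. split; [lra|]. f_equal; lra.
    + right; right. exists (/ mu). split.
      * split. apply Rinv_0_lt_compat; lra.
        rewrite <- Rinv_1. apply Rinv_lt_contravar; lra.
      * f_equal; [rewrite E1 | rewrite E2]; field; lra.
Qed.

Lemma orient_comb3 A P C l : orient A P (comb A C l) = l * orient A P C.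
Proof. unfold orient, comb; simpl; ring. Qed.

Lemma orient_degen a c : orient a c c = 0.
Proof. unfold orient; ring. Qed.
Lemma orient_degen2 a c : orient a c a = 0.
Proof. unfold orient; ring. Qed.

Lemma alg4 A C P l : orient A P C = 0 -> collinear4 A C P (comb A C l).
Proof. intros H. unfold collinear4.
  assert (E1 : orient A C P = - orient A P C) by (unfold orient; ring).
  assert (E2 : orient A C (comb A C l) = 0) by (unfold orient, comb; simpl; ring).
  assert (E3 : orient A P (comb A C l) = l * orient A P C) by apply orient_comb3.
  assert (E4 : orient C P (comb A C l) = - (1 - l) * orient A P C) by (unfold orient, comb; simpl; ring).
  rewrite E1, E2, E3, E4, H. repeat split; ring. Qed.

Lemma sep_case (S : list pt) (g : pt -> pt) (ginj : forall x y, g x = g y -> x = y)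
  (Hnn : forall p q r, In p S -> In q S -> In r S -> p <> q -> q <> r -> p <> r ->
     0 <= orient (g p) (g q) (g r) * orient p q r)
  (H4 : no_four_collinear (map g S))
  a b c p l (Ha : In a S) (Hb : In b S) (Hc : In c S) (Hp : In p S)
  (ab : a <> b) (bc : b <> c) (ac : a <> c) (ap : a <> p)
  (Hl : 0 < l < 1) (Hb' : g b = comb (g a) (g c) l)
  (Hs : orient a p c * orient a p b < 0) : False.
Proof.
  assert (pc : p <> c). { intro; subst p. rewrite orient_degen in Hs. lra. }
  assert (pb : p <> b). { intro; subst p. rewrite (orient_degen a b) in Hs. lra. }
  pose proof (Hnn a p c Ha Hp Hc ap pc ac) as H1.
  pose proof (Hnn a p b Ha Hp Hb ap pb ab) as H2.
  rewrite Hb', orient_comb3 in H2.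
  set (x := orient (g a) (g p) (g c)) in *.
  set (X := orient a p c) in *. set (Y := orient a p b) in *.
  assert (H3 : 0 <= (x * X) * (l * x * Y)) by (apply Rmult_le_pos; lra).
  assert (E : (x * X) * (l * x * Y) = (x * x) * (l * (X * Y))) by ring.
  assert (Hn : l * (X * Y) < 0).
  { rewrite <- (Rmult_0_r l). apply Rmult_lt_compat_l; lra. }
  assert (Hx : x = 0).
  { destruct (Req_dec_T x 0) as [e|n]; auto. exfalso.
    assert (0 < x * x) by (apply Rsqr_pos_lt; exact n).
    assert ((x * x) * (l * (X * Y)) < 0).
    { rewrite <- (Rmult_0_r (x*x)). apply Rmult_lt_compat_l; lra. }
    lra. }
  apply (H4 (g a) (g c) (g p) (g b)); try apply in_map; auto;
    try (intro E; apply ginj in E; congruence).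
  rewrite Hb'. apply alg4. exact Hx.
Qed.

Lemma seg_conv u v z1 z2 l : segment u v z1 -> segment u v z2 -> 0 <= l <= 1 ->
  segment u v (comb z1 z2 l).
Proof.
  intros [l1 [H1 ->]] [l2 [H2 ->]] Hl. exists ((1 - l) * l1 + l * l2). split.
  - split; nra.
  - unfold comb; simpl; f_equal; ring.
Qed.

Lemma key (S : list pt) (g : pt -> pt) (ginj : forall x y, g x = g y -> x = y)
  (GP : general_position S)
  (Hnn : forall p q r, In p S -> In q S -> In r S -> p <> q -> q <> r -> p <> r ->
     0 <= orient (g p) (g q) (g r) * orient p q r)
  (H4 : no_four_collinear (map g S))
  (Hedge : forall a b, In a S -> In b S -> exit_edge S a b -> maps_segment_to_segment g a b)
  a b c l (Ha : In a S) (Hb : In b S) (Hc : In c S)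
  (ab : a <> b) (bc : b <> c) (ac : a <> c)
  (Hl : 0 < l < 1) (Hb' : g b = comb (g a) (g c) l) : False.
Proof.
  destruct (classic (exists p, In p S /\ strictly_separates a p c b)) as [[p [Hp [Hap Hs]]]|N1].
  { exact (sep_case S g ginj Hnn H4 a b c p l Ha Hb Hc Hp ab bc ac Hap Hl Hb' Hs). }
  destruct (classic (exists p, In p S /\ strictly_separates c p a b)) as [[p [Hp [Hcp Hs]]]|N2].
  { apply (sep_case S g ginj Hnn H4 c b a p (1 - l) Hc Hb Ha Hp
      (not_eq_sym bc) (not_eq_sym ab) (not_eq_sym ac) Hcp); [lra| |exact Hs].
    rewrite Hb'; unfold comb; f_equal; ring. }
  assert (Hex : exit_edge S a c).
  { exists b. unfold exit_edge_with.
    repeat split; auto. }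
  destruct (Hedge a c Ha Hc Hex) as [u [v Hseg]].
  assert (Sa : segment u v (g a)).
  { apply Hseg. exists a. split; [|reflexivity]. exists 0. split; [lra|].
    destruct a; simpl; f_equal; ring. }
  assert (Sc : segment u v (g c)).
  { apply Hseg. exists c. split; [|reflexivity]. exists 1. split; [lra|].
    destruct c; simpl; f_equal; ring. }
  assert (Sb : segment u v (g b)) by (rewrite Hb'; apply seg_conv; auto; lra).
  apply Hseg in Sb. destruct Sb as [y [[m [Hm Ey]] Eb]].
  apply ginj in Eb. rewrite <- Eb in Ey.
  apply (GP a b c Ha Hb Hc ab bc ac). rewrite Ey. unfold orient; simpl; ring.
Qed.

Theorem mainTheorem5 (S : list pt) :
  NoDup S -> general_position S -> supporting S (exit_edge S).
Proof.
  intros ND GP. unfold supporting, same_order_type.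
  intros f HI Hedge H4 t1 Ht1 GP1 p q r Hp Hq Hr pq qr pr.
  apply Rnot_le_lt; intro Hle.
  set (L := list_prod S (list_prod S S)).
  set (G := fun t => minl (map (fun tr => term (fun x => f x (clamp t)) tr) L)).
  assert (Gcont : forall t0, continuity_pt G t0).
  { intro t0. exact (minl_cont L (fun tr t => term (fun x => f x (clamp t)) tr) t0
                      (fun tr => term_cont f HI tr t0)). }
  assert (HL : forall a b c, In (a, (b, c)) L -> In a S /\ In b S /\ In c S).
  { intros a b c H. unfold L in H. apply in_prod_iff in H as [H1 H2].
    apply in_prod_iff in H2 as [H2 H3]. auto. }
  assert (HLi : forall a b c, In a S -> In b S -> In c S -> In (a, (b, c)) L).
  { intros a b c H1 H2 H3. unfold L. apply in_prod_iff; split; auto.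
    apply in_prod_iff; auto. }
  assert (f0 : forall x, f x (clamp 0) = x).
  { intro x. rewrite clamp_id by lra. apply (proj2 (proj2 HI)). }
  assert (G0 : 0 < G 0).
  { unfold G. destruct (minl_cases (map (fun tr => term (fun x => f x (clamp 0)) tr) L))
      as [E|[x [Hx E]]]; rewrite E; [lra|].
    apply in_map_iff in Hx as [[a [b c]] [Ex Hin]]. subst x.
    apply HL in Hin as [Ha [Hb Hc]]. unfold term. rewrite !f0.
    destruct (pt_eq_dec a b); [lra|]. destruct (pt_eq_dec b c); [lra|].
    destruct (pt_eq_dec a c); [lra|].
    pose proof (GP a b c Ha Hb Hc n n0 n1).
    assert (0 < orient a b c * orient a b c) by (apply Rsqr_pos_lt; exact H). lra. }
  assert (G1 : G t1 <= 0).
  { unfold G. eapply Rle_trans. apply minl_le. apply in_map. apply (HLi p q r Hp Hq Hr).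
    unfold term. rewrite clamp_id by exact Ht1.
    destruct (pt_eq_dec p q); [contradiction|]. destruct (pt_eq_dec q r); [contradiction|].
    destruct (pt_eq_dec p r); [contradiction|]. rewrite Rmult_comm. exact Hle. }
  assert (Hts : exists ts, 0 <= ts <= 1 /\ G ts = 0).
  { destruct (Req_dec_T (G t1) 0) as [e|n].
    - exists t1; auto.
    - assert (0 < t1).
      { destruct (Req_dec_T t1 0) as [e|n']; [subst t1; lra|lra]. }
      destruct (IVT (fun t => - G t) 0 t1) as [z [Hz Ez]].
      + intro x. apply continuity_pt_opp. apply Gcont.
      + exact H.
      + lra.
      + lra.
      + exists z. split; [lra|lra]. }
  destruct Hts as [ts [Hts Gts]].
  set (g := fun x => f x ts).
  assert (ginj : forall x y, g x = g y -> x = y).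
  { destruct (proj1 (proj2 HI) ts Hts) as [h [Hh _]].
    intros x y E. pose proof (Hh x) as E1. pose proof (Hh y) as E2. simpl in *.
    unfold g in E. rewrite E in E1. congruence. }
  assert (Gts' : minl (map (fun tr => term g tr) L) = 0).
  { rewrite <- Gts. unfold G. rewrite clamp_id by exact Hts. reflexivity. }
  assert (Hnn : forall p q r, In p S -> In q S -> In r S -> p <> q -> q <> r -> p <> r ->
     0 <= orient (g p) (g q) (g r) * orient p q r).
  { intros a b c Ha Hb Hc ab bc ac. rewrite <- Gts'.
    eapply Rle_trans. apply minl_le. apply in_map. apply (HLi a b c Ha Hb Hc).
    unfold term.
    destruct (pt_eq_dec a b); [contradiction|]. destruct (pt_eq_dec b c); [contradiction|].
    destruct (pt_eq_dec a c); [contradiction|]. lra. }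
  destruct (minl_cases (map (fun tr => term g tr) L)) as [E|[x [Hx E]]].
  { lra. }
  apply in_map_iff in Hx as [[a [b c]] [Ex Hin]]. subst x.
  apply HL in Hin as [Ha [Hb Hc]]. rewrite Gts' in E. unfold term in E.
  destruct (pt_eq_dec a b) as [|ab]; [lra|]. destruct (pt_eq_dec b c) as [|bc]; [lra|].
  destruct (pt_eq_dec a c) as [|ac]; [lra|].
  symmetry in E. apply Rmult_integral in E.
  destruct E as [E|E]; [|exfalso; exact (GP a b c Ha Hb Hc ab bc ac E)].
  assert (He : forall a b, In a S -> In b S -> exit_edge S a b -> maps_segment_to_segment g a b)
    by (intros; apply Hedge; auto).
  assert (H4' : no_four_collinear (map g S)) by (apply H4; exact Hts).
  assert (gab : g a <> g b) by (intro Q; apply ginj in Q; contradiction).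
  assert (gbc : g b <> g c) by (intro Q; apply ginj in Q; contradiction).
  assert (gac : g a <> g c) by (intro Q; apply ginj in Q; contradiction).
  destruct (collinear_middle (g a) (g b) (g c) gab gbc gac E) as [[l [Hl Hm]]|[[l [Hl Hm]]|[l [Hl Hm]]]].
  - exact (key S g ginj GP Hnn H4' He a b c l Ha Hb Hc ab bc ac Hl Hm).
  - exact (key S g ginj GP Hnn H4' He b a c l Hb Ha Hc (not_eq_sym ab) ac bc Hl Hm).
  - exact (key S g ginj GP Hnn H4' He a c b l Ha Hc Hb ac (not_eq_sym bc) ab Hl Hm).
Qed.
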